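(* Let $(X,d,\kappa)$ be a digital metric space with more than one point. Suppose there exist $x_0,y_0 \in X$ such that $d(x_0,y_0) = \min\{d(x,y) : x,y \in X,\ d(x,y) > 0\}$. Then there is no function $T: X \to X$ that is both onto and a digital expansive mapping.
   Context: A digital metric space is a triple $(X,d,\kappa)$ with $X\subset\mathbb{Z}^n$, $\kappa$ an adjacency relation on $X$, and $d$ a metric on $X$. A function $T: X \to X$ is a digital expansive mapping if there exists $k > 1$ such that $d(T(x),T(y)) \ge k\,d(x,y)$ for all $x,y \in X$. *)

(* Defs.v *)
(* points of Z^n are row vectors 'rV[int]_n; the metric is
   valued in an arbitrary real number type R : realType. *)
From HB Require Import structures.
From mathcomp Require Import all_boot all_order all_algebra.
From mathcomp Require Import reals.
Set Implicit Arguments. Unset Strict Implicit. Unset Printing Implicit Defensive.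
Import Order.TTheory GRing.Theory Num.Theory.
Local Open Scope ring_scope.

Definition is_metric_on (R : realType) (n : nat) (X : 'rV[int]_n -> Prop)
    (d : 'rV[int]_n -> 'rV[int]_n -> R) : Prop :=
  (forall x y, X x -> X y -> 0 <= d x y) /\
  (forall x y, X x -> X y -> (d x y = 0 <-> x = y)) /\
  (forall x y, X x -> X y -> d x y = d y x) /\
  (forall x y z, X x -> X y -> X z -> d x z <= d x y + d y z).

Definition is_adjacency_on (n : nat) (X : 'rV[int]_n -> Prop)
    (kappa : 'rV[int]_n -> 'rV[int]_n -> Prop) : Prop :=
  (forall x, X x -> ~ kappa x x) /\
  (forall x y, X x -> X y -> kappa x y -> kappa y x).

Definition digital_metric_space (R : realType) (n : nat) (X : 'rV[int]_n -> Prop)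
    (d : 'rV[int]_n -> 'rV[int]_n -> R) (kappa : 'rV[int]_n -> 'rV[int]_n -> Prop) : Prop :=
  is_metric_on X d /\ is_adjacency_on X kappa.

Definition maps_into (n : nat) (X : 'rV[int]_n -> Prop) (T : 'rV[int]_n -> 'rV[int]_n) : Prop :=
  forall x, X x -> X (T x).

Definition onto_on (n : nat) (X : 'rV[int]_n -> Prop) (T : 'rV[int]_n -> 'rV[int]_n) : Prop :=
  forall y, X y -> exists x, X x /\ T x = y.

Definition digital_expansive (R : realType) (n : nat) (X : 'rV[int]_n -> Prop)
    (d : 'rV[int]_n -> 'rV[int]_n -> R) (T : 'rV[int]_n -> 'rV[int]_n) : Prop :=
  exists k : R, 1 < k /\ forall x y, X x -> X y -> k * d x y <= d (T x) (T y).

Definition is_min_pos_dist (R : realType) (n : nat) (X : 'rV[int]_n -> Prop)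
    (d : 'rV[int]_n -> 'rV[int]_n -> R) (x0 y0 : 'rV[int]_n) : Prop :=
  X x0 /\ X y0 /\ 0 < d x0 y0 /\
  (forall x y, X x -> X y -> 0 < d x y -> d x0 y0 <= d x y).

(* Main.v *)
Require Import Defs.
From HB Require Import structures.
From mathcomp Require Import all_boot all_order all_algebra.
From mathcomp Require Import reals.
Import Order.TTheory GRing.Theory Num.Theory.
Local Open Scope ring_scope.

Theorem mainTheorem9 (R : realType) (n : nat) (X : 'rV[int]_n -> Prop)
    (d : 'rV[int]_n -> 'rV[int]_n -> R) (kappa : 'rV[int]_n -> 'rV[int]_n -> Prop) :
  digital_metric_space X d kappa ->
  (exists x y, X x /\ X y /\ x <> y) ->
  (exists x0 y0, is_min_pos_dist X d x0 y0) ->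
  ~ (exists T : 'rV[int]_n -> 'rV[int]_n,
       maps_into X T /\ onto_on X T /\ digital_expansive X d T).
Proof.
move=> [[Hpos [Hzero _]] _] _ [x0 [y0 [Hx0 [Hy0 [Hm Hmin]]]]].
move=> [T [_ [Hon [k [Hk HT]]]]].
have [a [Ha Ta]] := Hon x0 Hx0.
have [b [Hb Tb]] := Hon y0 Hy0.
have Hab : 0 < d a b.
  rewrite lt0r Hpos // andbT; apply/eqP => /(Hzero _ _ Ha Hb) eab.
  move: Hm; rewrite -Ta eab Tb.
  by rewrite (proj2 (Hzero _ _ Hy0 Hy0) erefl) ltxx.
have h1 := Hmin _ _ Ha Hb Hab.
have h2 := HT _ _ Ha Hb.
rewrite Ta Tb in h2.
have : k * d x0 y0 <= d x0 y0.
  apply: le_trans h2; rewrite ler_pM2l //; apply: lt_trans Hk; exact: ltr01.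
rewrite -{2}(mul1r (d x0 y0)) ler_pM2r // => /(lt_le_trans Hk).
by rewrite ltxx.
Qed.
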